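(* Assume $r_t^l=r^l$ and $b_t^l=b^l$ for all $t\in\{1,\dots,T\}$ and $l\in\{1,\dots,L\}$. Given parameters $\gamma=\{\gamma_l\}_{l\le L}$, consider PB2: minimize $F(\rho)=\sum_{t=1}^T\sum_{l=1}^L\rho_t^l r^l b^l(\rho_t^l)$ s.t. $\sum_{t=1}^T\rho_t^l\ge\gamma_l$ for all $l$, $\rho_t^l\in[0,1]$; and PB5: minimize $\hat F(\hat\rho)=T\sum_{l=1}^L\hat\rho^l r^l b^l(\hat\rho^l)$ s.t. $T\hat\rho^l\ge\gamma_l$ for all $l$, $\hat\rho^l\in[0,1]$. If $\hat\rho^\ast=\{\hat\rho^l_\ast\}_{l\le L}$ is an optimal solution of PB5, then $\rho^\ast=\{\rho_t^{l\ast}\}$ with $\rho_t^{l\ast}=\hat\rho^l_\ast$ for all $t$ and $l$ is an optimal solution of PB2.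
   Context: $T,L$ positive integers; each $r^l$ is a positive integer and each $b^l:[0,1]\to[0,b^l_{\max}]$ is strictly increasing and convex. *)

(* Defs.v *)
From mathcomp Require Import all_boot all_order all_algebra.
Set Implicit Arguments. Unset Strict Implicit. Unset Printing Implicit Defensive.
Import Order.TTheory GRing.Theory Num.Theory.
Local Open Scope ring_scope.

Section Defs.
Variable R : realFieldType.

Definition in01 (x : R) := (0 <= x) && (x <= 1).

Definition strinc01 (f : R -> R) :=
  forall x y, in01 x -> in01 y -> x < y -> f x < f y.

Definition convex01 (f : R -> R) :=
  forall x y l, in01 x -> in01 y -> 0 <= l -> l <= 1 ->
    f (l * x + (1 - l) * y) <= l * f x + (1 - l) * f y.

Variables (T L : nat) (r : 'I_L -> nat) (b : 'I_L -> R -> R)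
          (gamma : 'I_L -> R).

Definition F_PB2 (rho : 'I_T -> 'I_L -> R) : R :=
  \sum_(t < T) \sum_(l < L) rho t l * (r l)%:R * b l (rho t l).

Definition feasible_PB2 (rho : 'I_T -> 'I_L -> R) : Prop :=
  (forall l, \sum_(t < T) rho t l >= gamma l) /\ (forall t l, in01 (rho t l)).

Definition optimal_PB2 (rho : 'I_T -> 'I_L -> R) : Prop :=
  feasible_PB2 rho /\ forall rho', feasible_PB2 rho' -> F_PB2 rho <= F_PB2 rho'.

Definition F_PB5 (rh : 'I_L -> R) : R :=
  T%:R * \sum_(l < L) rh l * (r l)%:R * b l (rh l).

Definition feasible_PB5 (rh : 'I_L -> R) : Prop :=
  (forall l, T%:R * rh l >= gamma l) /\ (forall l, in01 (rh l)).

Definition optimal_PB5 (rh : 'I_L -> R) : Prop :=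
  feasible_PB5 rh /\ forall rh', feasible_PB5 rh' -> F_PB5 rh <= F_PB5 rh'.

End Defs.

(* Main.v *)
Require Import Defs.
From mathcomp Require Import all_boot all_order all_algebra.
From mathcomp Require Import ring lra.
Import Order.TTheory GRing.Theory Num.Theory.
Local Open Scope ring_scope.

Section Aux.
Variable R : realFieldType.

Lemma sum_in01 (s : seq R) : all (@in01 R) s ->
  0 <= \sum_(x <- s) x <= (size s)%:R.
Proof.
elim: s => [|x s IH] /=; first by rewrite big_nil lexx.
move=> /andP[/andP[h0 h1] /IH /andP[k0 k1]].
rewrite big_cons -add1n natrD; apply/andP; split; lra.
Qed.

Lemma jensen (g : R -> R) (s : seq R) : convex01 g -> all (@in01 R) s ->
  (0 < size s)%N ->
  (size s)%:R * g ((\sum_(x <- s) x) / (size s)%:R) <= \sum_(x <- s) g x.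
Proof.
move=> cg; elim: s => [|x s IH] //= /andP[hx hs] _.
case: s IH hs => [|y s'] IH hs.
  by rewrite !big_cons !big_nil /= !addr0 divr1 mul1r.
move: (y :: s') IH hs (isT : (0 < size (y :: s'))%N) => s IH hs n0.
have := IH hs n0.
have := @sum_in01 s hs.
rewrite !big_cons.
set m := \sum_(x <- s) x; set G := \sum_(x <- s) g x.
set n := (size s)%:R.
have npos : 0 < n by rewrite ltr0n.
move=> /andP[m0 mn] Hind.
have ha : in01 (m / n).
  apply/andP; split; first by rewrite divr_ge0 // ltW.
  by rewrite ler_pdivrMr // mul1r.
have e : (x + m) / (1 + n) = (1 + n)^-1 * x + (1 - (1+n)^-1) * (m / n).
  by field; apply/andP; split; lra.
rewrite -add1n natrD -/n e.
have l0 : 0 <= (1+n)^-1 by rewrite invr_ge0; lra.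
have l1 : (1+n)^-1 <= 1 by rewrite invf_le1; lra.
have := cg x (m/n) ((1+n)^-1) hx ha l0 l1.
set z := g _ => Hc.
have : (1+n) * z <= (1+n) * ((1 + n)^-1 * g x + (1 - (1 + n)^-1) * g (m / n)).
  by rewrite ler_pM2l //; lra.
have -> : (1+n) * ((1 + n)^-1 * g x + (1 - (1 + n)^-1) * g (m / n))
   = g x + n * g (m/n) by field; lra.
lra.
Qed.

Lemma convex_xb (b : R -> R) (c : R) : 0 <= c -> strinc01 b -> convex01 b ->
  (forall x, in01 x -> 0 <= b x) ->
  convex01 (fun x => x * c * b x).
Proof.
move=> c0 sb cb bp x y l hx hy l0 l1.
have hz : in01 (l * x + (1 - l) * y).
  move: hx hy => /andP[? ?] /andP[? ?]; apply/andP; split; nra.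
have H1 := cb x y l hx hy l0 l1.
have Hxy : 0 <= (x - y) * (b x - b y).
  case: (ltrgtP x y) => h.
  - have := sb x y hx hy h; nra.
  - have := sb y x hy hx h; nra.
  - by rewrite h !subrr mul0r.
have Hz : 0 <= l * x + (1 - l) * y by move: hz => /andP[].
have H2 : (l * x + (1 - l) * y) * b (l * x + (1 - l) * y) <=
          (l * x + (1 - l) * y) * (l * b x + (1 - l) * b y) by rewrite ler_wpM2l.
have H3 : l * (x * b x) + (1 - l) * (y * b y) -
   (l * x + (1 - l) * y) * (l * b x + (1 - l) * b y) = (l * (1 - l)) * ((x - y) * (b x - b y)) by ring.
have H4 : 0 <= (l * (1 - l)) * ((x - y) * (b x - b y)) by apply: mulr_ge0 => //; nra.
have E : forall u, u * c * b u = c * (u * b u) by move=> u; ring.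
rewrite !E.
have : c * ((l * x + (1 - l) * y) * b (l * x + (1 - l) * y)) <= c * (l * (x * b x) + (1 - l) * (y * b y)).
  by apply: ler_wpM2l => //; lra.
move=> H5; apply: (le_trans H5); lra.
Qed.

End Aux.
Arguments sum_in01 {R s}.
Arguments jensen {R g s}.
Arguments convex_xb {R b c}.

Theorem lemma6 (R : realFieldType) (T L : nat) (r : 'I_L -> nat)
  (b : 'I_L -> R -> R) (bmax : 'I_L -> R) (gamma : 'I_L -> R) :
  (0 < T)%N -> (0 < L)%N ->
  (forall l, (0 < r l)%N) ->
  (forall l, strinc01 (b l)) ->
  (forall l, convex01 (b l)) ->
  (forall l x, in01 x -> 0 <= b l x <= bmax l) ->
  forall rh : 'I_L -> R,
    optimal_PB5 T r b gamma rh ->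
    optimal_PB2 r b gamma (fun (_ : 'I_T) l => rh l).
Proof.
move=> T0 L0 r0 sb cb bb rh [[fg f01] opt].
have Tp : 0 < T%:R :> R by rewrite ltr0n.
have sumc : forall (c : R), \sum_(t < T) c = T%:R * c.
  by move=> c; rewrite sumr_const card_ord mulr_natl.
have FPB2 : F_PB2 r b (fun (_ : 'I_T) l => rh l) = F_PB5 T r b rh.
  by rewrite /F_PB2 /F_PB5 sumc.
split.
  by split => // l; rewrite sumc.
move=> rho' [fg' f01'].
rewrite FPB2.
pose rh' l := (\sum_(t < T) rho' t l) / T%:R.
have all01 : forall l, all (@in01 R) (map (fun t => rho' t l) (index_enum 'I_T)).
  by move=> l; apply/allP => x /mapP [t _ ->].
have sz : forall l, size (map (fun t => rho' t l) (index_enum 'I_T)) = T.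
  by move=> l; rewrite size_map -[RHS]card_ord cardE enumT.
have sm : forall l (F : R -> R), \sum_(x <- map (fun t => rho' t l) (index_enum 'I_T)) F x
    = \sum_(t < T) F (rho' t l) by move=> l F; rewrite big_map.
have feas : feasible_PB5 T gamma rh'.
  split => l.
    by rewrite /rh' mulrC divfK ?fg' // gt_eqF.
  have := sum_in01 (all01 l); rewrite sz sm => /andP[h0 h1].
  apply/andP; split; first by apply: divr_ge0 => //; lra.
  by rewrite ler_pdivrMr // mul1r.
apply: (le_trans (opt _ feas)).
rewrite /F_PB5 /F_PB2 exchange_big mulr_sumr /=.
apply: ler_sum => l _.
have cg := convex_xb (ler0n R (r l)) (sb l) (cb l) (fun x hx => proj1 (andP (bb l x hx))).
have := jensen cg (all01 l); rewrite sz sm => /(_ T0).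
by rewrite (sm l (fun x => x * (r l)%:R * b l x)).
Qed.
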